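(* Let $K\subseteq L$ be convex bodies in $\mathbb{R}^d$ with the origin in the interior of $K$, and let $F$ be a non-trivial linear subspace of $\mathbb{R}^d$. Assume there are contact pairs $(v_1,p_1),\dots,(v_m,p_m)$ of $K$ and $L$ and positive weights $\alpha_1,\dots,\alpha_m$ such that \[ P_F\Big(\sum_{i}\alpha_i p_i\otimes v_i\Big)P_F=P_F,\quad \sum_i\alpha_ip_i=0,\quad \operatorname{tr}\Big(\sum_i\alpha_ip_i\otimes v_i\Big)=\sum_i\alpha_i=d,\quad \sum_i\alpha_iP_Fv_i=0. \] Let $K_{\mathrm{in}}=\operatorname{conv}\{v_1,\dots,v_m\}$ and $L_{\mathrm{out}}=\bigcap_{i=1}^m\{x\in\mathbb{R}^d:\langle p_i,x\rangle\le1\}$. Then \[ L_{\mathrm{out}}\cap F\subset -d\cdot P_FK_{\mathrm{in}}. \]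
   Context: A convex body is a compact convex set with nonempty interior. $P_F$ is orthogonal projection onto $F$. The polar of $S$ is $S^\circ=\{p:\langle x,p\rangle\le1\ \forall x\in S\}$. For convex bodies $K\subseteq L$, a contact pair of $K$ and $L$ is a pair $(v,p)$ with $v\in\partial K\cap\partial L$, $p\in\partial K^\circ\cap\partial L^\circ$, $\langle p,v\rangle=1$. For vectors $p,v$, $p\otimes v$ is the operator $x\mapsto\langle v,x\rangle p$. *)

(* Defs.v *)
From HB Require Import structures.
From mathcomp Require Import all_boot all_order all_algebra.
From mathcomp Require Import all_classical all_reals all_analysis.
Set Implicit Arguments. Unset Strict Implicit. Unset Printing Implicit Defensive.
Import Order.TTheory GRing.Theory Num.Theory.
Import numFieldTopology.Exports numFieldNormedType.Exports.
Local Open Scope classical_set_scope.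
Local Open Scope ring_scope.

Section Defs.
Variables (R : realType) (d : nat).
Notation V := 'rV[R]_d.

Definition dotv (x y : V) : R := \sum_(j < d) x 0 j * y 0 j.

Definition is_convex (A : set V) : Prop :=
  forall x y t, A x -> A y -> 0 <= t <= 1 -> A (t *: x + (1 - t) *: y).

Definition convex_body (A : set V) : Prop :=
  compact A /\ is_convex A /\ (interior A !=set0).

Definition boundary (A : set V) : set V := closure A `\` interior A.

Definition polar (S : set V) : set V := [set p | forall x, S x -> dotv x p <= 1].

Definition contact_pair (K L : set V) (v p : V) : Prop :=
  boundary K v /\ boundary L v /\ boundary (polar K) p /\ boundary (polar L) p
  /\ dotv p v = 1.

(* P is the matrix (acting on row vectors: x |-> x *m P) of the orthogonal
   projection onto the row space of F *)
Definition is_orthoproj (F P : 'M[R]_d) : Prop :=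
  forall x : V, (x *m P <= F)%MS /\
    (forall y : V, (y <= F)%MS -> dotv (x - x *m P) y = 0).

(* p (x) v : x |-> <v,x> p, as a matrix acting on row vectors: v^T *m p *)
Definition tensor (p v : V) : 'M[R]_d := v^T *m p.

Definition conv_hull m (v : 'I_m -> V) : set V :=
  [set x | exists lam : 'I_m -> R, (forall i, 0 <= lam i) /\
     \sum_(i < m) lam i = 1 /\ x = \sum_(i < m) lam i *: v i].

End Defs.

(* Main.v *)
Require Import Defs.
From HB Require Import structures.
From mathcomp Require Import all_boot all_order all_algebra.
From mathcomp Require Import all_classical all_reals all_analysis.
From mathcomp Require Import ring lra.
Import Order.TTheory GRing.Theory Num.Theory.
Import numFieldTopology.Exports numFieldNormedType.Exports.
Local Open Scope classical_set_scope.
Local Open Scope ring_scope.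

Section Aux.
Context {R : realType} {d : nat}.
Notation V := 'rV[R]_d.

Lemma dotvE (x y : V) : dotv x y = (x *m y^T) 0 0.
Proof. by rewrite /dotv !mxE; apply: eq_bigr => j _; rewrite mxE. Qed.

Lemma dotvC (x y : V) : dotv x y = dotv y x.
Proof. by rewrite /dotv; apply: eq_bigr => j _; rewrite mulrC. Qed.

Lemma dotvBl (x y z : V) : dotv (x - y) z = dotv x z - dotv y z.
Proof. by rewrite !dotvE mulmxBl !mxE. Qed.

Lemma dotv0 (x : V) : dotv x x = 0 -> x = 0.
Proof.
rewrite /dotv => /psumr_eq0P H.
apply/matrixP => i j; rewrite (ord1 i) mxE.
have /eqP := H (fun k _ => ltac:(rewrite -expr2; exact: sqr_ge0)) j isT.
by rewrite mulf_eq0 orbb => /eqP.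
Qed.

Lemma subB_sub (a b : V) (F : 'M[R]_d) :
  (a <= F)%MS -> (b <= F)%MS -> (a - b <= F)%MS.
Proof. by move=> ha hb; apply: addmx_sub => //; rewrite -scaleN1r scalemx_sub. Qed.

Lemma proj_dot {F P : 'M[R]_d} {u y : V} : is_orthoproj F P ->
  (y <= F)%MS -> dotv (u *m P) y = dotv u y.
Proof.
move=> /(_ u) [_ H] /H; rewrite dotvBl => /eqP; rewrite subr_eq0 => /eqP.
by move=> ->.
Qed.

Lemma proj_id {F P : 'M[R]_d} {y : V} : is_orthoproj F P ->
  (y <= F)%MS -> y *m P = y.
Proof.
move=> hP hy; have [hyP H] := hP y.
have hz : (y - y *m P <= F)%MS by apply: subB_sub.
have := H _ hz => /dotv0 /eqP; rewrite subr_eq0 => /eqP <-//.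
Qed.

Lemma tr11 (A : 'M[R]_1) : A 0 0 = A^T 0 0.
Proof. by rewrite mxE. Qed.

End Aux.

Theorem mainTheorem10 (R : realType) (d : nat) (K L : set 'rV[R]_d)
  (F P : 'M[R]_d) (m : nat) (v p : 'I_m -> 'rV[R]_d) (alpha : 'I_m -> R) :
  convex_body K -> convex_body L -> K `<=` L -> interior K 0 ->
  (F != 0)%MS -> is_orthoproj F P ->
  (forall i, contact_pair K L (v i) (p i)) ->
  (forall i, 0 < alpha i) ->
  P *m (\sum_(i < m) alpha i *: tensor (p i) (v i)) *m P = P ->
  \sum_(i < m) alpha i *: p i = 0 ->
  \tr (\sum_(i < m) alpha i *: tensor (p i) (v i)) = d%:R ->
  \sum_(i < m) alpha i = d%:R ->
  \sum_(i < m) alpha i *: (v i *m P) = 0 ->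
  forall x : 'rV[R]_d,
    (forall i, dotv (p i) x <= 1) -> (x <= F)%MS ->
    exists2 y, conv_hull v y & x = - (d%:R) *: (y *m P).
Proof.
move=> _ _ _ _ HF hP _ ha hPMP hsp _ hsa hsv x hx hxF.
have dpos : (0 < d)%N.
  rewrite lt0n; apply/eqP => d0; move: HF; subst d.
  by rewrite (thinmx0 F) eqxx.
have dR : 0 < d%:R :> R by rewrite ltr0n.
set M := \sum_(i < m) alpha i *: tensor (p i) (v i) in hPMP.
pose lam i := alpha i * (1 - dotv (p i) x) / d%:R.
exists (\sum_(i < m) lam i *: v i).
  exists lam; split; [|split] => //.
  - move=> i; rewrite /lam; apply: divr_ge0; last exact: ltW.
    by apply: mulr_ge0; [exact: ltW | rewrite subr_ge0].
  - rewrite /lam -mulr_suml.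
    under eq_bigr do rewrite mulrBr mulr1.
    rewrite sumrB hsa.
    have -> : \sum_(i < m) alpha i * dotv (p i) x = 0.
      transitivity (dotv (\sum_(i < m) alpha i *: p i) x); last first.
        by rewrite hsp /dotv big1 // => j _; rewrite mxE mul0r.
      rewrite dotvE mulmx_suml summxE; apply: eq_bigr => i _.
      by rewrite -scalemxAl mxE dotvE.
    by rewrite subr0 divff // gt_eqF.
have key : \sum_(i < m) (alpha i * dotv (p i) x) *: (v i *m P) = x.
  have -> : \sum_(i < m) (alpha i * dotv (p i) x) *: (v i *m P) = x *m M^T *m P.
    rewrite /M linear_sum /= mulmx_sumr mulmx_suml; apply: eq_bigr => i _.
    rewrite linearZ /= /tensor trmx_mul trmxK -scalemxAr -scalemxAl mulmxA.
    rewrite [x *m (p i)^T]mx11_scalar mul_scalar_mx -scalemxAl scalerA.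
    by rewrite dotvC dotvE.
  set w := x *m M^T *m P.
  have hwF : (w <= F)%MS by have [] := hP (x *m M^T).
  have hz : (w - x <= F)%MS by apply: subB_sub.
  apply/eqP; rewrite -subr_eq0; apply/eqP/dotv0.
  rewrite dotvBl; apply/eqP; rewrite subr_eq0; apply/eqP.
  set y := w - x in hz *.
  have hy : y *m M *m P = y.
    rewrite -{1}(proj_id hP hz) -!mulmxA (mulmxA P M P) hPMP.
    exact: (proj_id hP hz).
  rewrite /w (proj_dot hP hz) dotvE [LHS]tr11 !trmx_mul !trmxK mulmxA -dotvE.
  by rewrite -(proj_dot hP hxF) hy dotvC.
rewrite -[LHS]key -[LHS]subr0 -{2}hsv -sumrB mulmx_suml scaler_sumr.
apply: eq_bigr => i _; rewrite -scalemxAl scalerA -scalerBl; congr (_ *: _).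
rewrite /lam; field; exact: lt0r_neq0.
Qed.
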